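(* Let $K=\operatorname{cone}\{e_1,\dots,e_m\}\subset\mathbb{R}^m$ be a simplicial cone. Then there exists $\varepsilon\in\mathcal{E}$ such that $K_\varepsilon$ is subdual if and only if there exists an index set $I\subset\{1,\dots,m\}$, with complement $I^c=\{1,\dots,m\}\setminus I$, such that $\langle e_i,e_j\rangle\ge0$ for all $i,j\in I$, $\langle e_k,e_\ell\rangle\ge0$ for all $k,\ell\in I^c$, and $\langle e_i,e_k\rangle\le0$ for all $i\in I$, $k\in I^c$.
   Context: $\mathbb{R}^m$ carries the standard inner product. A simplicial cone is $\operatorname{cone}\{e_1,\dots,e_m\}=\{\sum t^ie_i:t^i\ge0\}$ with $e_1,\dots,e_m$ linearly independent. $\mathcal{E}=\{\varepsilon\in\mathbb{R}^m:|\varepsilon^i|=1,\ i=1,\dots,m\}$ and $K_\varepsilon=\operatorname{cone}\{\varepsilon^1e_1,\dots,\varepsilon^me_m\}$. A cone $K$ is subdual if $K\subset K^*$, where $K^*=\{y:\langle x,y\rangle\ge0\ \forall x\in K\}$. *)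

(* Defs.v *)
From mathcomp Require Import all_boot all_order all_algebra.
Set Implicit Arguments. Unset Strict Implicit. Unset Printing Implicit Defensive.
Import Order.TTheory GRing.Theory Num.Theory.
Local Open Scope ring_scope.

Definition inner {R : realFieldType} {m : nat} (x y : 'rV[R]_m) : R :=
  \sum_(i < m) x 0 i * y 0 i.

Definition gen_mx {R : realFieldType} {m : nat} (e : 'I_m -> 'rV[R]_m) : 'M[R]_m :=
  \matrix_(i < m) e i.

Definition lin_indep {R : realFieldType} {m : nat} (e : 'I_m -> 'rV[R]_m) : Prop :=
  row_free (gen_mx e).

Definition cone {R : realFieldType} {m : nat} (e : 'I_m -> 'rV[R]_m) (x : 'rV[R]_m) : Prop :=
  exists t : 'I_m -> R, (forall i, 0 <= t i) /\ x = \sum_(i < m) t i *: e i.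

Definition dual_cone {R : realFieldType} {m : nat} (K : 'rV[R]_m -> Prop) (y : 'rV[R]_m) : Prop :=
  forall x, K x -> 0 <= inner x y.

Definition subdual {R : realFieldType} {m : nat} (K : 'rV[R]_m -> Prop) : Prop :=
  forall x, K x -> dual_cone K x.

Definition sign_vector {R : realFieldType} {m : nat} (eps : 'I_m -> R) : Prop :=
  forall i, `|eps i| = 1.

Definition K_eps {R : realFieldType} {m : nat} (e : 'I_m -> 'rV[R]_m) (eps : 'I_m -> R) :=
  cone (fun i => eps i *: e i).

(* Main.v *)
Require Import Defs.
From mathcomp Require Import all_boot all_order all_algebra.
Import Order.TTheory GRing.Theory Num.Theory.
Local Open Scope ring_scope.

Lemma inner_suml (R : realFieldType) (m : nat) (F : 'I_m -> 'rV[R]_m) y :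
  inner (\sum_(i < m) F i) y = \sum_(i < m) inner (F i) y.
Proof.
rewrite /inner (exchange_big) /=; apply: eq_bigr => k _.
by rewrite summxE mulr_suml.
Qed.

Lemma inner_scalel (R : realFieldType) (m : nat) (a : R) (x y : 'rV[R]_m) :
  inner (a *: x) y = a * inner x y.
Proof.
rewrite /inner mulr_sumr; apply: eq_bigr => k _; by rewrite mxE mulrA.
Qed.

Lemma inner_sym (R : realFieldType) (m : nat) (x y : 'rV[R]_m) :
  inner x y = inner y x.
Proof. by rewrite /inner; apply: eq_bigr => k _; rewrite mulrC. Qed.

Lemma inner_sumr (R : realFieldType) (m : nat) (F : 'I_m -> 'rV[R]_m) y :
  inner y (\sum_(i < m) F i) = \sum_(i < m) inner y (F i).
Proof. rewrite inner_sym inner_suml; apply: eq_bigr => i _; exact: inner_sym. Qed.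

Lemma inner_scaler (R : realFieldType) (m : nat) (a : R) (x y : 'rV[R]_m) :
  inner x (a *: y) = a * inner x y.
Proof. by rewrite inner_sym inner_scalel inner_sym. Qed.

Lemma gen_in_cone (R : realFieldType) (m : nat) (f : 'I_m -> 'rV[R]_m) i :
  cone f (f i).
Proof.
exists (fun j => if j == i then 1 else 0); split.
  by move=> j; case: (j == i).
rewrite (bigD1 i) //= eqxx scale1r big1 ?addr0 // => j /negbTE ->.
by rewrite scale0r.
Qed.

Theorem lemma3 (R : realFieldType) (m : nat) (e : 'I_m -> 'rV[R]_m) :
  lin_indep e ->
  ((exists eps : 'I_m -> R, sign_vector eps /\ subdual (K_eps e eps)) <->
   (exists I : {set 'I_m},
      (forall i j, i \in I -> j \in I -> 0 <= inner (e i) (e j)) /\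
      (forall k l, k \in ~: I -> l \in ~: I -> 0 <= inner (e k) (e l)) /\
      (forall i k, i \in I -> k \in ~: I -> inner (e i) (e k) <= 0))).
Proof.
move=> _; split.
  move=> [eps [Heps Hsub]].
  have key i j : 0 <= eps i * eps j * inner (e i) (e j).
    have := Hsub _ (@gen_in_cone R m (fun i => eps i *: e i) i) _
      (@gen_in_cone R m (fun i => eps i *: e i) j).
    rewrite inner_scalel inner_scaler.
    by rewrite mulrCA mulrA [inner (e j) _]inner_sym.
  have Ep i : 0 < eps i -> eps i = 1.
    by move=> h; rewrite -(Heps i) gtr0_norm.
  have En i : ~~ (0 < eps i) -> eps i = -1.
    move=> h; have := Heps i; rewrite ler0_norm; last by rewrite leNgt.
    move=> E; apply: (canRL (@opprK _)); by rewrite E.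
  pose I0 := [set i : 'I_m | 0 < eps i].
  exists I0; split; last split.
  - move=> i j; rewrite /I0 !inE => /Ep hi /Ep hj.
    by have := key i j; rewrite hi hj !mul1r.
  - move=> i j; rewrite /I0 !inE => /En hi /En hj.
    by have := key i j; rewrite hi hj mulrNN !mul1r.
  - move=> i j; rewrite /I0 !inE => /Ep hi /En hj.
    by have := key i j; rewrite hi hj mul1r mulN1r oppr_ge0.
move=> [I [H1 [H2 H3]]].
pose eps := fun i : 'I_m => if i \in I then (1 : R) else -1.
have key i j : 0 <= eps i * eps j * inner (e i) (e j).
  rewrite /eps; case: (boolP (i \in I)) => hi; case: (boolP (j \in I)) => hj.
  - by rewrite !mul1r H1.
  - by rewrite mul1r mulN1r oppr_ge0 H3 // inE.
  - by rewrite mulr1 mulN1r oppr_ge0 inner_sym H3 // inE.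
  - by rewrite mulrNN !mul1r H2 // inE.
exists eps; split.
  by move=> i; rewrite /eps; case: (i \in I); rewrite ?normrN normr1.
move=> x [t [ht ->]] y [s [hs ->]].
rewrite inner_suml; apply: sumr_ge0 => i _.
rewrite inner_sumr; apply: sumr_ge0 => j _.
rewrite inner_scalel inner_scaler inner_scalel inner_scaler.
apply: mulr_ge0 => //; apply: mulr_ge0 => //.
by have := key i j; rewrite -mulrA.
Qed.
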